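(* For every $t\ge 1$, LOCAL-WEFT$[t]\subseteq$ LOCAL-FPT.
   Context: Distributed LOCAL model: a network is a finite connected undirected graph $G$, $n=|V(G)|$, nodes have unique $O(\log n)$-bit identifiers, initially know only their identifier, their neighbours' identifiers, their input labels and the parameter $k$; computation in synchronous rounds with unbounded messages to neighbours and arbitrary local computation; time = number of rounds. $\mathcal G_{s,t}$ is the set of finite connected graphs with unary predicates $P_1..P_s$ and binary predicates $E_1..E_t$; a parameterized problem is a set $\mathsf P\subseteq\mathcal G_{s,t}\times\mathbb N$. An algorithm decides $\mathsf P$ if every node outputs accept/reject and $(G,k)\in\mathsf P$ iff some node accepts. LOCAL-FPT: problems decided by a LOCAL algorithm in $f(k)$ rounds, $f$ computable. LOCAL reductions: a LOCAL algorithm turning $(G,k)$ into $(G',k')$ represented by maps $\nu:V(G')\to V(G)$ and $\eta$ assigning to each edge $\{x,y\}\in E(G')$ a path of $G$ between $\nu(x)$ and $\nu(y)$ (stored at the nodes of $G$; all nodes know $k'$). $\mathsf P_1\le_{\mathrm{LOCAL}}\mathsf P_2$ if for computable $s,r,t,p$ such a reduction exists with $|V(G')|\le|V(G)|^{s(k)}$, all paths $\eta(e)$ of length $\le r(k)$, running time $\le t(k)$ rounds, $k'\le p(k)$, and $(G,k)\in\mathsf P_1\iff(G',k')\in\mathsf P_2$ (congestion unbounded). $[\mathcal P]^{\mathrm{LOCAL}}$ is the set of problems reducing to some member of $\mathcal P$. Circuits: a Boolean decision circuit with $n$ inputs is $C=(V,E,\beta)$, $(V,E)$ a finite DAG, $\beta:V\to\{\neg,\vee,\wedge,\bigvee,\bigwedge\}\cup\{x_1,\dots,x_n\}$,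 where in-degree-0 vertices are input gates labelled by some $x_i$, in-degree-1 vertices are $\neg$, in-degree-2 vertices are $\vee$ or $\wedge$ (small gates), in-degree $\ge3$ vertices are $\bigvee$ or $\bigwedge$ (large gates), and there is exactly one vertex of out-degree 0, the output gate. It computes $f_C:\{0,1\}^n\to\{0,1\}$ in the usual way. Depth: maximum number of gates on an input–output path; weft: maximum number of large gates on an input–output path. A circuit is viewed as a coloured connected graph (edge orientation and gate types as predicates, input indices as local labels). For a family $\mathcal F$ of circuits, $\mathsf P_{\mathcal F}=\{(C,k): C\in\mathcal F$ and $C$ accepts some input vector with exactly $k$ ones$\}$. Weft$[t]$ is the class of all $\mathsf P_{\mathcal F}$ where all circuits of $\mathcal F$ have depth bounded by a common constant and weft at most $t$. LOCAL-WEFT$[t]:=[\text{Weft}[t]]^{\mathrm{LOCAL}}$. *)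

(* Defs.v *)
From HB Require Import structures.
From mathcomp Require Import all_boot.
From Stdlib Require List.

Set Implicit Arguments.
Unset Strict Implicit.
Unset Printing Implicit Defensive.

Inductive prf : Type :=
| PZero
| PSucc
| PProj (i : nat)
| PComp (f : prf) (gs : list prf)
| PPrec (f g : prf)
| PMu (f : prf).

Inductive peval : prf -> seq nat -> nat -> Prop :=
| ev_zero args : peval PZero args 0
| ev_succ x args : peval PSucc (x :: args) x.+1
| ev_proj i args : peval (PProj i) args (nth 0 args i)
| ev_comp f gs args ys y :
    List.Forall2 (fun g z => peval g args z) gs ys ->
    peval f ys y -> peval (PComp f gs) args y
| ev_prec0 f g args y :
    peval f args y -> peval (PPrec f g) (0 :: args) y
| ev_precS f g n args r y :
    peval (PPrec f g) (n :: args) r ->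
    peval g (n :: r :: args) y -> peval (PPrec f g) (n.+1 :: args) y
| ev_mu f args y :
    peval f (y :: args) 0 ->
    (forall z, z < y -> exists v, peval f (z :: args) v.+1) ->
    peval (PMu f) args y.

Definition computable (f : nat -> nat) : Prop :=
  exists p : prf, forall n, peval p [:: n] (f n).

Record struct (s t : nat) := Struct {
  vert : finType;
  adj : rel vert;
  adj_sym : symmetric adj;
  adj_irr : irreflexive adj;
  adj_conn : forall x y, connect adj x y;
  vert_ne : 0 < #|vert|;
  lab1 : 'I_s -> pred vert;
  lab2 : 'I_t -> rel vert;
  lab2_adj : forall i x y, lab2 i x y -> adj x y }.

Arguments vert {s t} _.
Arguments adj {s t} _ _ _.
Arguments lab1 {s t} _ _ _.
Arguments lab2 {s t} _ _ _ _.

Definition iso (s t : nat) (G H : struct s t) : Prop :=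
  exists f : vert G -> vert H,
    bijective f /\
    (forall x y, adj H (f x) (f y) = adj G x y) /\
    (forall i x, lab1 H i (f x) = lab1 G i x) /\
    (forall i x y, lab2 H i (f x) (f y) = lab2 G i x y).

Definition problem (s t : nat) := struct s t -> nat -> Prop.

(* Identifiers: unique, O(log n) bits, i.e. < n^c for a fixed c.       *)
Definition valid_ids (c : nat) (s t : nat) (G : struct s t) (id : vert G -> nat) : Prop :=
  injective id /\ forall v, id v < #|vert G| ^ c.

(* A (full-information) synchronous LOCAL algorithm with output type O.
   linit k id labels nbrs : initial state of a node knowing k, its own
   identifier, its unary input labels, and for each identifier j either
   None (no neighbour with id j) or the binary labels (E_i(v,u), E_i(u,v))
   of the edge to the neighbour u with id j.
   lstep st msgs : new state, given the messages (= states) received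
   from the neighbours, indexed by their identifiers.
   Messages are unbounded, so sending the whole state is w.l.o.g. *)
Record local_alg (s t : nat) (O : Type) := LocalAlg {
  lstate : Type;
  linit : nat -> nat -> ('I_s -> bool) -> (nat -> option ('I_t -> bool * bool)) -> lstate;
  lstep : lstate -> (nat -> option lstate) -> lstate;
  lout : lstate -> O }.

Arguments lstate {s t O} _.
Arguments linit {s t O} _ _ _ _ _.
Arguments lstep {s t O} _ _ _.
Arguments lout {s t O} _ _.

Definition nbr_of (s t : nat) (G : struct s t) (id : vert G -> nat) (v : vert G) (j : nat)
  : option (vert G) := [pick u | adj G v u && (id u == j)].

Fixpoint run_state (s t : nat) (O : Type) (A : local_alg s t O) (G : struct s t)
  (id : vert G -> nat) (k : nat) (r : nat) : vert G -> lstate A :=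
  match r with
  | 0 => fun v => linit A k (id v) (fun i => lab1 G i v)
           (fun j => omap (fun u => fun i => (lab2 G i v u, lab2 G i u v)) (nbr_of id v j))
  | r'.+1 => fun v => lstep A (run_state A id k r' v)
                          (fun j => omap (run_state A id k r') (nbr_of id v j))
  end.

Definition output (s t : nat) (O : Type) (A : local_alg s t O) (G : struct s t)
  (id : vert G -> nat) (k r : nat) (v : vert G) : O := lout A (run_state A id k r v).

Definition decides_in (c s t : nat) (P : problem s t) (A : local_alg s t bool)
  (f : nat -> nat) : Prop :=
  forall (G : struct s t) (k : nat) (id : vert G -> nat), valid_ids c id ->
    (P G k <-> exists v, output A id k (f k) v).

Definition LOCAL_FPT (c s t : nat) (P : problem s t) : Prop :=
  exists (A : local_alg s t bool) (f : nat -> nat), computable f /\ decides_in c P A f.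

(* Output of a node v of G: k', and for each local index j either None *)
(* or the description of the node x of G' hosted at v (nu x = v) with  *)
(* name (id v, j): its unary labels and, for each name (a,b), either    *)
(* None or the labels of the G'-edge {x,y} where y has name (a,b),     *)
(* together with the path eta(x,y) (as a sequence of identifiers).    *)
Record red_out (s' t' : nat) := RedOut {
  ro_k : nat;
  ro_hosted : nat -> option (('I_s' -> bool) *
                 (nat * nat -> option (('I_t' -> bool * bool) * seq nat))) }.

Definition represents (s t s' t' : nat) (G : struct s t) (id : vert G -> nat)
  (o : vert G -> red_out s' t') (k' : nat) (G' : struct s' t')
  (nu : vert G' -> vert G) (eta : vert G' -> vert G' -> seq (vert G)) : Prop :=
  exists nm : vert G' -> nat,
    injective (fun x => (id (nu x), nm x)) /\
    (forall v, ro_k (o v) = k') /\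
    (forall v j,
      match ro_hosted (o v) j with
      | None => forall x, nu x = v -> nm x <> j
      | Some (l, nb) =>
          exists x, nu x = v /\ nm x = j /\ (forall i, l i = lab1 G' i x) /\
            forall a b,
              match nb (a, b) with
              | None => forall y, adj G' x y -> (id (nu y), nm y) <> (a, b)
              | Some (el, p) =>
                  exists y, adj G' x y /\ id (nu y) = a /\ nm y = b /\
                    (forall i, el i = (lab2 G' i x y, lab2 G' i y x)) /\
                    p = map id (eta x y)
              end
      end).

Definition short_paths (s t s' t' : nat) (G : struct s t) (G' : struct s' t')
  (nu : vert G' -> vert G) (eta : vert G' -> vert G' -> seq (vert G)) (len : nat) : Prop :=
  forall x y, adj G' x y ->
    [/\ path (adj G) (nu x) (eta x y), last (nu x) (eta x y) = nu y & size (eta x y) <= len].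

Definition local_reduces (c s1 t1 s2 t2 : nat) (P1 : problem s1 t1) (P2 : problem s2 t2)
  : Prop :=
  exists (sz rr tt pp : nat -> nat) (A : local_alg s1 t1 (red_out s2 t2)),
    [/\ computable sz, computable rr, computable tt, computable pp &
    forall (G : struct s1 t1) (k : nat) (id : vert G -> nat), valid_ids c id ->
      exists (k' : nat) (G' : struct s2 t2) (nu : vert G' -> vert G)
             (eta : vert G' -> vert G' -> seq (vert G)),
        [/\ represents id (fun v => output A id k (tt k) v) k' nu eta,
            #|vert G'| <= #|vert G| ^ sz k,
            short_paths nu eta (rr k),
            k' <= pp k &
            (P1 G k <-> P2 G' k')]].

Definition g_in   : 'I_6 := @Ordinal 6 0 isT.
Definition g_neg  : 'I_6 := @Ordinal 6 1 isT.
Definition g_or   : 'I_6 := @Ordinal 6 2 isT.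
Definition g_and  : 'I_6 := @Ordinal 6 3 isT.
Definition g_bor  : 'I_6 := @Ordinal 6 4 isT.
Definition g_band : 'I_6 := @Ordinal 6 5 isT.

Definition circ := struct 6 1.

Definition wire (C : circ) : rel (vert C) := lab2 C (@Ordinal 1 0 isT).
Definition indeg (C : circ) (x : vert C) : nat := #|[pred y | wire y x]|.
Definition outdeg (C : circ) (x : vert C) : nat := #|[pred y | wire x y]|.

Definition is_circuit (C : circ) : Prop :=
  [/\ (forall x y, adj C x y -> wire x y != wire y x),
      (forall x y, wire x y -> ~~ connect (@wire C) y x),
      (forall x, #|[pred i : 'I_6 | lab1 C i x]| = 1),
      (forall x, [/\ lab1 C g_in x = (indeg x == 0),
                     lab1 C g_neg x = (indeg x == 1),
                     (lab1 C g_or x || lab1 C g_and x) = (indeg x == 2) &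
                     (lab1 C g_bor x || lab1 C g_band x) = (2 < indeg x)]) &
      #|[pred x : vert C | outdeg x == 0]| = 1].

(* C accepts some input vector of weight exactly k; input gates are the
   variables, val is the (unique) gate valuation. *)
Definition accepts_weight (C : circ) (k : nat) : Prop :=
  exists val : vert C -> bool,
    [/\ (forall x, lab1 C g_neg x -> val x = ~~ [exists y, wire y x && val y]),
        (forall x, lab1 C g_or x || lab1 C g_bor x -> val x = [exists y, wire y x && val y]),
        (forall x, lab1 C g_and x || lab1 C g_band x -> val x = [forall y, wire y x ==> val y]),
        #|[pred x | lab1 C g_in x && val x]| = k &
        exists o, (outdeg o == 0) && val o].

Definition io_path (C : circ) (x : vert C) (p : seq (vert C)) : bool :=
  [&& lab1 C g_in x, path (@wire C) x p & outdeg (last x p) == 0].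

Definition depth_le (C : circ) (d : nat) : Prop :=
  forall (x : vert C) p, io_path x p -> size (x :: p) <= d.

Definition weft_le (C : circ) (w : nat) : Prop :=
  forall (x : vert C) p, io_path x p ->
    count (fun y => lab1 C g_bor y || lab1 C g_band y) (x :: p) <= w.

Definition P_F (F : circ -> Prop) : problem 6 1 :=
  fun C k => F C /\ accepts_weight C k.

Definition in_Weft (w : nat) (P : problem 6 1) : Prop :=
  exists F : circ -> Prop,
    [/\ (forall C C', iso C C' -> F C -> F C'),
        (exists d, forall C, F C -> [/\ is_circuit C, depth_le C d & weft_le C w]) &
        (forall C k, P C k <-> P_F F C k)].

Definition LOCAL_WEFT (c w s t : nat) (P : problem s t) : Prop :=
  exists P2 : problem 6 1, in_Weft w P2 /\ local_reduces c P P2.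

(* Main.v *)
Require Import Defs.
From HB Require Import structures.
From mathcomp Require Import all_boot.
From Stdlib Require Import FunctionalExtensionality ClassicalDescription.

Set Implicit Arguments.
Unset Strict Implicit.
Unset Printing Implicit Defensive.

Section Views.
Variables s t : nat.

Inductive view : Type :=
| VLeaf : nat -> nat -> ('I_s -> bool) -> (nat -> option ('I_t -> bool * bool)) -> view
| VNode : view -> (nat -> option view) -> view.

Definition fullA (lo : view -> bool) : local_alg s t bool :=
  @LocalAlg s t bool view VLeaf VNode lo.

Fixpoint myview (G : struct s t) (id : vert G -> nat) (k r : nat) : vert G -> view :=
  match r with
  | 0 => fun v => VLeaf k (id v) (fun i => lab1 G i v)
           (fun j => omap (fun u => fun i => (lab2 G i v u, lab2 G i u v)) (nbr_of id v j))
  | r'.+1 => fun v => VNode (myview id k r' v) (fun j => omap (myview id k r') (nbr_of id v j))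
  end.

Lemma run_full lo (G : struct s t) (id : vert G -> nat) k r :
  run_state (fullA lo) id k r = myview id k r.
Proof.
elim: r => [|r IH] /=; first by [].
by rewrite IH.
Qed.

Section Sim.
Variables (O : Type) (A : local_alg s t O).
Fixpoint sim (x : view) : lstate A :=
  match x with
  | VLeaf k i l n => linit A k i l n
  | VNode st m => lstep A (sim st) (fun j => match m j with Some y => Some (sim y) | None => None end)
  end.

Lemma sim_run (G : struct s t) (id : vert G -> nat) k r v :
  run_state A id k r v = sim (myview id k r v).
Proof.
elim: r v => [|r IH] v //=.
rewrite IH; congr (lstep A _ _); apply: functional_extensionality => j.
by case: (nbr_of id v j) => //= u; rewrite IH.
Qed.
End Sim.

Fixpoint kof (x : view) : nat := match x with VLeaf k _ _ _ => k | VNode st _ => kof st end.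
Fixpoint idof (x : view) : nat := match x with VLeaf _ i _ _ => i | VNode st _ => idof st end.

Lemma kof_view (G : struct s t) (id : vert G -> nat) k r v : kof (myview id k r v) = k.
Proof. by elim: r v => [|r IH] v //=. Qed.
Lemma idof_view (G : struct s t) (id : vert G -> nat) k r v : idof (myview id k r v) = id v.
Proof. by elim: r v => [|r IH] v //=. Qed.

Lemma view_trunc (G G0 : struct s t) (id : vert G -> nat) (id0 : vert G0 -> nat) k a b v v0 :
  myview id k (a + b) v = myview id0 k (a + b) v0 -> myview id k a v = myview id0 k a v0.
Proof.
elim: b => [|b IH]; first by rewrite addn0.
by rewrite addnS /= => [[/IH]].
Qed.

Lemma nbr_inj (G : struct s t) (id : vert G -> nat) v w :
  injective id -> adj G v w -> nbr_of id v (id w) = Some w.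
Proof.
move=> inj vw; rewrite /nbr_of; case: pickP => [u /andP[_ /eqP /inj ->] //|].
by move/(_ w); rewrite vw eqxx.
Qed.

Lemma walk_view (G G0 : struct s t) (id : vert G -> nat) (id0 : vert G0 -> nat) k :
  injective id0 -> forall p r v v0,
  myview id k (r + size p) v = myview id0 k (r + size p) v0 -> path (adj G0) v0 p ->
  exists u, myview id k r u = myview id0 k r (last v0 p).
Proof.
move=> inj; elim=> [|w p IH] r v v0 /=; first by rewrite addn0 => H _; exists v.
rewrite addnS /= => [[_ H]] /andP[vw pw].
have := congr1 (fun f => f (id0 w)) H; rewrite /= nbr_inj //.
case E: (nbr_of id v (id0 w)) => [u|] //= [Hu].
exact: IH Hu pw.
Qed.

End Views.

Definition facts (s t : nat) (H : struct s t) (N : vert H -> nat * nat) (x : vert H)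
  (l : 'I_s -> bool) (nb : nat * nat -> option (('I_t -> bool * bool) * seq nat)) : Prop :=
  (forall i, l i = lab1 H i x) /\
  forall a b, match nb (a, b) with
              | None => forall y, adj H x y -> N y <> (a, b)
              | Some (el, _) => exists y, [/\ adj H x y, N y = (a, b) &
                                  forall i, el i = (lab2 H i x y, lab2 H i y x)]
              end.

Lemma iso_facts (s t : nat) (H1 H2 : struct s t) (N1 : vert H1 -> nat * nat)
  (N2 : vert H2 -> nat * nat) (psi : vert H1 -> vert H2) :
  injective N1 -> injective N2 -> (forall x, N2 (psi x) = N1 x) ->
  (forall x, exists l nb, facts N1 x l nb /\ facts N2 (psi x) l nb) -> iso H1 H2.
Proof.
move=> i1 i2 Npsi F.
have ipsi : injective psi by move=> x y /(congr1 N2); rewrite !Npsi => /i1.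
have fwd : forall x y, adj H1 x y ->
   adj H2 (psi x) (psi y) /\ forall i, lab2 H2 i (psi x) (psi y) = lab2 H1 i x y.
  move=> x y xy; have [l [nb [[_ F1] [_ F2]]]] := F x.
  have := F1 (N1 y).1 (N1 y).2; have := F2 (N1 y).1 (N1 y).2.
  rewrite -surjective_pairing.
  case: (nb (N1 y)) => [[el p]|]; last by move=> _ /(_ y xy).
  move=> [y2 [xy2 Ny2 E2]] [y1 [xy1 Ny1 E1]].
  have e1 : y1 = y by apply: i1.
  have e2 : y2 = psi y by apply: i2; rewrite Npsi.
  subst y1 y2; split=> // i; have := E1 i; rewrite E2 => -[]; done.
have bwd : forall x z, adj H2 (psi x) z -> exists y, adj H1 x y /\ psi y = z.
  move=> x z xz; have [l [nb [[_ F1] [_ F2]]]] := F x.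
  have := F1 (N2 z).1 (N2 z).2; have := F2 (N2 z).1 (N2 z).2.
  rewrite -surjective_pairing.
  case: (nb (N2 z)) => [[el p]|]; last by move=> /(_ z xz).
  move=> _ [y1 [xy1 Ny1 _]]; exists y1; split=> //; apply: i2; by rewrite Npsi.
have adjE : forall x y, adj H2 (psi x) (psi y) = adj H1 x y.
  move=> x y; apply/idP/idP; last by case/fwd.
  by case/bwd=> y1 [xy1 /ipsi <-].
have surj : forall z, exists x, psi x = z.
  have [x0 _] : exists x0 : vert H1, x0 \in predT by apply/card_gt0P; exact: vert_ne.
  move=> z; have /connectP [p pth ->] := adj_conn (psi x0) z.
  elim: p x0 pth => [|y p IH] x0 /=; first by exists x0.
  case/andP=> /bwd [y1 [_ <-]]; exact: IH.
have [g gK] := fin_all_exists surj.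
exists psi; split.
- by exists g => [x|//]; apply: ipsi; rewrite gK.
split; first exact: adjE.
split; first by move=> i x; have [l [nb [[F1 _] [F2 _]]]] := F x; rewrite -F1 -F2.
move=> i x y; case xy: (adj H1 x y); first by have [_ ->] := fwd x y xy.
apply/idP/idP=> /lab2_adj; [by rewrite adjE xy | by rewrite xy].
Qed.

Lemma card_bij (T T' : finType) (f : T -> T') (g : T' -> T) (p : pred T) :
  cancel f g -> cancel g f -> #|[pred y | p (g y)]| = #|[pred x | p x]|.
Proof.
move=> fK gK; rewrite -(card_image (can_inj gK)); apply: eq_card => x.
rewrite inE; apply/imageP/idP => [[y /= Py ->] //|Px].
by exists (f x); rewrite ?inE /= ?fK.
Qed.

Lemma ex_bij (T T' : finType) (f : T -> T') (g : T' -> T) (p : pred T) :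
  cancel f g -> cancel g f -> [exists y, p (g y)] = [exists x, p x].
Proof.
move=> fK gK; apply/existsP/existsP => [[y Py]|[x Px]]; first by exists (g y).
by exists (f x); rewrite fK.
Qed.

Lemma all_bij (T T' : finType) (f : T -> T') (g : T' -> T) (p : pred T) :
  cancel f g -> cancel g f -> [forall y, p (g y)] = [forall x, p x].
Proof.
move=> fK gK; apply/forallP/forallP => [H x|H y //]; by rewrite -(fK x).
Qed.

Lemma accepts_iso (C C' : circ) k : iso C C' -> accepts_weight C k -> accepts_weight C' k.
Proof.
move=> [f [[g fK gK] [adjE [l1E l2E]]]] [val [Hneg Hor Hand Hcard [o /andP[Ho Vo]]]].
have l1g : forall i x, lab1 C' i x = lab1 C i (g x) by move=> i x; rewrite -{1}(gK x) l1E.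
have wg : forall x y, wire x y = wire (g x) (g y) :> bool.
  by move=> x y; rewrite /wire -{1}(gK x) -{1}(gK y) l2E.
exists (fun x => val (g x)); split.
- move=> x; rewrite l1g => /Hneg ->; congr (~~ _).
  rewrite -(ex_bij (fun y => wire y (g x) && val y) fK gK).
  by apply: eq_existsb => y; rewrite wg.
- move=> x; rewrite !l1g => /Hor ->.
  rewrite -(ex_bij (fun y => wire y (g x) && val y) fK gK).
  by apply: eq_existsb => y; rewrite wg.
- move=> x; rewrite !l1g => /Hand ->.
  rewrite -(all_bij (fun y => wire y (g x) ==> val y) fK gK).
  by apply: eq_forallb => y; rewrite wg.
- rewrite -Hcard -(card_bij (fun x => lab1 C g_in x && val x) fK gK).
  by apply: eq_card => y; rewrite !inE l1g.
- exists (f o); rewrite fK Vo andbT.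
  move: Ho; rewrite /outdeg -(card_bij (fun y => wire o y) fK gK).
  suff -> : #|[pred y | wire (f o) y]| = #|[pred y | wire o (g y)]| by [].
  by apply: eq_card => y; rewrite !inE wg fK.
Qed.

Lemma sink_path (T : finType) (e : rel T) :
  (forall x y, e x y -> ~~ connect e y x) ->
  forall x, exists p, path e x p /\ forall y, ~~ e (last x p) y.
Proof.
move=> acyc.
suff H : forall n x, #|[pred y | connect e x y]| < n ->
  exists p, path e x p /\ forall y, ~~ e (last x p) y.
  by move=> x; apply: (H _ x (ltnSn _)).
elim=> [|n IH] x // Hc.
case: (pickP (e x)) => [y xy|none]; last by exists [::]; split=> // y; rewrite none.
have [|p [pp pl]] := IH y.
  rewrite ltnS in Hc; apply: (@leq_trans #|[pred y | connect e x y]|) => //.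
  apply: proper_card; apply/properP; split.
    by apply/subsetP=> z; rewrite !inE => /(connect_trans (connect1 xy)).
  by exists x; rewrite !inE ?connect0 // (negbTE (acyc _ _ xy)).
by exists (y :: p); rewrite /= xy pp.
Qed.

Lemma rev_sym (T : Type) (e : rel T) : symmetric e ->
  forall p a, path e a p -> exists q, [/\ path e (last a p) q, last (last a p) q = a & size q = size p].
Proof.
move=> sym; elim=> [|b p IH] a /=; first by exists [::].
case/andP=> ab pb; have [q [pq lq sq]] := IH b pb.
exists (rcons q a); rewrite rcons_path pq lq sym ab last_rcons size_rcons sq; split=> //.
Qed.

Lemma circ_radius (C : circ) d : is_circuit C -> depth_le C d ->
  exists o, forall x, exists p, [/\ path (adj C) o p, last o p = x & size p <= d].
Proof.
case=> _ acyc _ types out1 dep.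
move/eqP/card1P: out1 => [o Ho].
exists o => x.
have [pf [ppf sf]] := sink_path acyc x.
have acyc' : forall a b : vert C, [rel a b : vert C | wire b a] a b -> ~~ connect [rel a b : vert C | wire b a] b a.
  by move=> a b /= ba; rewrite connect_rev /=; apply: acyc.
have [pb [ppb sb]] := sink_path acyc' x.
set i := last x pb in sb.
have ini : lab1 C g_in i.
  have [-> _ _ _] := types i; apply/eqP; apply: eq_card0 => y; rewrite inE.
  by apply/negbTE; apply: sb.
have outl : last x pf = o.
  suff : last x pf \in [pred x | outdeg x == 0] by rewrite Ho inE => /eqP.
  rewrite inE; apply/eqP; apply: eq_card0 => y.
  by rewrite inE; apply/negbTE; apply: sf.
have pi : path (@wire C) i (rev (belast x pb)) by rewrite /i rev_path.
have li : last i (rev (belast x pb)) = x.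
  by rewrite /i; case: (pb) => //= y p; rewrite rev_cons last_rcons.
have io : io_path i (rev (belast x pb) ++ pf).
  rewrite /io_path ini cat_path pi li ppf last_cat li outl.
  by rewrite (eqP (_ : o \in [pred x | outdeg x == 0])) // Ho inE.
have := dep _ _ io; rewrite /= size_cat => Hs.
have szf : size pf <= d by apply: leq_trans Hs; apply: leq_trans (leq_addl _ _) _.
have ppa : path (adj C) x pf.
  by apply: sub_path ppf => a b; apply: lab2_adj.
have [q [pq lq sq]] := rev_sym (@adj_sym _ _ C) ppa.
by exists q; rewrite -outl sq; split.
Qed.

Definition near (s t : nat) (G : struct s t) (L : nat) (a b : vert G) :=
  exists p, [/\ path (adj G) a p, last a p = b & size p <= L].
Arguments near {s t} G L a b.

Lemma lift_near (s t s' t' : nat) (G : struct s t) (G' : struct s' t') nu eta L :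
  @short_paths s t s' t' G G' nu eta L ->
  forall p a, path (adj G') a p -> near G (size p * L) (nu a) (nu (last a p)).
Proof.
move=> sp; elim=> [|b p IH] a /=; first by exists [::].
case/andP=> ab pb; have [q [pq lq sq]] := IH b pb.
have [pe le se] := sp a b ab.
exists (eta a b ++ q); rewrite cat_path last_cat le pe pq lq size_cat mulSn; split=> //.
exact: leq_add.
Qed.

Lemma near_mono (s t : nat) (G : struct s t) L1 L2 a b :
  near G L1 a b -> L1 <= L2 -> near G L2 a b.
Proof. by move=> [p [pp lp sp]] le; exists p; split=> //; apply: leq_trans le. Qed.

Definition padd : prf := PPrec (PProj 0) (PComp PSucc [:: PProj 1]).
Definition pmul : prf := PPrec PZero (PComp padd [:: PProj 1; PProj 2]).
Fixpoint pconst (d : nat) : prf :=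
  match d with 0 => PZero | d'.+1 => PComp PSucc [:: pconst d'] end.

Lemma peval_add n m : peval padd [:: n; m] (n + m).
Proof.
elim: n => [|n IH].
  by apply: ev_prec0; apply: (ev_proj 0 [:: m]).
apply: ev_precS IH _.
apply: (ev_comp (ys := [:: n + m])).
  by constructor; [apply: (ev_proj 1 [:: n; n + m; m]) | constructor].
exact: ev_succ.
Qed.

Lemma peval_mul n m : peval pmul [:: n; m] (n * m).
Proof.
elim: n => [|n IH]; first by apply: ev_prec0; apply: ev_zero.
apply: ev_precS IH _.
apply: (ev_comp (ys := [:: n * m; m])).
  constructor; first by apply: (ev_proj 1 [:: n; n * m; m]).
  by constructor; [apply: (ev_proj 2 [:: n; n * m; m]) | constructor].
by rewrite mulSn addnC; apply: peval_add.
Qed.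

Lemma peval_const d args : peval (pconst d) args d.
Proof.
elim: d => [|d IH]; first exact: ev_zero.
apply: (ev_comp (ys := [:: d])); first by constructor.
exact: ev_succ.
Qed.

Lemma computable_R (f g : nat -> nat) d :
  computable f -> computable g -> computable (fun k => f k + g k * d).
Proof.
move=> [pf Hf] [pg Hg].
exists (PComp padd [:: pf; PComp pmul [:: pg; pconst d]]) => n.
apply: (ev_comp (ys := [:: f n; g n * d])); last exact: peval_add.
constructor; first exact: Hf.
constructor; last by constructor.
apply: (ev_comp (ys := [:: g n; d])); last exact: peval_mul.
constructor; first exact: Hg.
by constructor; [apply: peval_const | constructor].
Qed.

Section Rep.
Variables (s t s' t' : nat) (G : struct s t) (id : vert G -> nat) (o : vert G -> red_out s' t')
  (G' : struct s' t') (nu : vert G' -> vert G) (nm : vert G' -> nat)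
  (eta : vert G' -> vert G' -> seq (vert G)).

Hypothesis host : forall v j,
      match ro_hosted (o v) j with
      | None => forall x, nu x = v -> nm x <> j
      | Some (l, nb) =>
          exists x, nu x = v /\ nm x = j /\ (forall i, l i = lab1 G' i x) /\
            forall a b,
              match nb (a, b) with
              | None => forall y, adj G' x y -> (id (nu y), nm y) <> (a, b)
              | Some (el, p) =>
                  exists y, adj G' x y /\ id (nu y) = a /\ nm y = b /\
                    (forall i, el i = (lab2 G' i x y, lab2 G' i y x)) /\
                    p = map id (eta x y)
              end
      end.


Lemma rep_some v j l nb : ro_hosted (o v) j = Some (l, nb) ->
  exists x, [/\ nu x = v, nm x = j & facts (fun y => (id (nu y), nm y)) x l nb].
Proof.
move=> E; have := host v j; rewrite E => -[x [xv [xj [Hl Hn]]]].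
exists x; split=> //; split=> // a b; move: (Hn a b); case: (nb (a, b)) => [[el p]|] //.
by move=> [y [xy [ya [yb [ye _]]]]]; exists y; split=> //; rewrite ya yb.
Qed.

Lemma rep_facts : injective (fun x => (id (nu x), nm x)) ->
  forall x, exists l nb, ro_hosted (o (nu x)) (nm x) = Some (l, nb) /\
                    facts (fun y => (id (nu y), nm y)) x l nb.
Proof.
move=> inj x; case E: (ro_hosted (o (nu x)) (nm x)) => [[l nb]|].
  have [x1 [x1v x1j F]] := rep_some E.
  have ex : x1 = x by apply: inj => /=; rewrite x1v x1j.
  by subst x1; exists l, nb.
by have := host (nu x) (nm x); rewrite E => /(_ x erefl).
Qed.
End Rep.

Lemma outA (s t : nat) lo (G : struct s t) (id : vert G -> nat) k r v :
  output (fullA lo) id k r v = lo (myview id k r v).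
Proof. by rewrite /output run_full. Qed.

Theorem mainTheorem4 :
  forall (c : nat), 1 <= c ->
  forall (w : nat), 1 <= w ->
  forall (s t : nat) (P : problem s t),
    LOCAL_WEFT c w P -> LOCAL_FPT c P.
Proof.
move=> c _ w _ s t P [P2 [[F [Fiso [d Fd] P2E]] [sz [rr [tt [pp [Ared [_ crr ctt _ red]]]]]]]].
pose R := fun k => tt k + rr k * d.
pose Good (G0 : struct s t) (id0 : vert G0 -> nat) (k0 : nat) (v0 : vert G0) :=
  exists k' (G' : struct 6 1) (nu : vert G' -> vert G0) eta,
    [/\ represents id0 (fun v => output Ared id0 k0 (tt k0) v) k' nu eta,
        forall x, near G0 (rr k0 * d) v0 (nu x) & (P G0 k0 <-> P2 G' k')].
pose Q (st : view s t) := exists k0 (G0 : struct s t) (id0 : vert G0 -> nat) v0,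
   [/\ valid_ids c id0, myview id0 k0 (R k0) v0 = st, Good G0 id0 k0 v0 & P G0 k0].
pose lo st := if excluded_middle_informative (Q st) then true else false.
exists (fullA lo), R; split; first exact: computable_R.
move=> G k id vid.
have [k'' [G'' [nu'' [eta'' [rep'' _ sh'' _ PE'']]]]] := red G k id vid.
split.
- move=> PGk; have /P2E [FG _] := PE''.1 PGk.
  have [circ dep _] := Fd _ FG.
  have [o Ho] := circ_radius circ dep.
  exists (nu'' o); rewrite outA /lo; case: excluded_middle_informative => // nQ; exfalso; apply: nQ.
  exists k, G, id, (nu'' o); split=> //; exists k'', G'', nu'', eta''; split=> //.
  move=> x; have [p [pth lp sp]] := Ho x; have := lift_near sh'' pth; rewrite lp => Hn.
  by apply: near_mono Hn _; rewrite mulnC leq_mul.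
- move=> [v]; rewrite outA /lo; case: excluded_middle_informative => // HQ _.
  have [k0 [G0 [id0 [v0 [vid0 Ev Good0 PG0]]]]] := HQ.
  have ek : k0 = k by rewrite -(kof_view id0 k0 (R k0) v0) Ev kof_view.
  subst k0.
  have [k' [G' [nu' [eta' [rep' nr' PE']]]]] := Good0.
  have /P2E [FG' AG'] := PE'.1 PG0.
  apply/PE''.2/P2E.
  case: rep' => nm' [inj' [rk' host']]; case: rep'' => nm'' [inj'' [rk'' host'']].
  have corr : forall x0, exists u, output Ared id k (tt k) u = output Ared id0 k (tt k) (nu' x0)
                                /\ id u = id0 (nu' x0).
    move=> x0; have [p [pth lp sp]] := nr' x0.
    have E1 : myview id k ((tt k + size p) + (rr k * d - size p)) v =
              myview id0 k ((tt k + size p) + (rr k * d - size p)) v0.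
      by rewrite -addnA subnKC // Ev.
    have [u Hu] := walk_view (proj1 vid0) (view_trunc E1) pth.
    rewrite lp in Hu; exists u; split; first by rewrite /output !sim_run Hu.
    by rewrite -(idof_view id k (tt k) u) Hu idof_view.
  have ex : forall x0, exists x'', (id (nu'' x''), nm'' x'') = (id0 (nu' x0), nm' x0) /\
      exists l nb, facts (fun y => (id0 (nu' y), nm' y)) x0 l nb /\
                   facts (fun y => (id (nu'' y), nm'' y)) x'' l nb.
    move=> x0; have [u [Hout Hid]] := corr x0.
    have [l [nb [Eh F']]] := rep_facts host' inj' x0.
    have Eh'' : ro_hosted ((fun v => output Ared id k (tt k) v) u) (nm' x0) = Some (l, nb).
      by rewrite /= Hout.
    have [x'' [xu xn F'']] := rep_some host'' Eh''.
    by exists x''; rewrite xu xn Hid; split=> //; exists l, nb.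
  have [psi Hpsi] := fin_all_exists ex.
  have isoG : iso G' G''.
    apply: (iso_facts (N1 := fun y => (id0 (nu' y), nm' y))
                      (N2 := fun y => (id (nu'' y), nm'' y)) (psi := psi)) => //.
      by move=> x; case: (Hpsi x).
    by move=> x; case: (Hpsi x).
  have ekk : k' = k''.
    have [x0 _] : exists x0 : vert G', x0 \in predT by apply/card_gt0P; exact: vert_ne.
    have [u [Hout _]] := corr x0.
    by rewrite -(rk' (nu' x0)) -(rk'' u) /= Hout.
  subst k''; split; first exact: Fiso FG'.
  exact: accepts_iso AG'.
Qed.
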